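(* Let $(\mathcal{X},\mathbf{h})$ be an almost representable polymatroid, let $0\le\epsilon\le\mathbf{h}(\mathcal{X})$, and define $\mathbf{g}(\mathcal{A})=\min\big(\mathbf{h}(\mathcal{A}),\ \mathbf{h}(\mathcal{X})-\epsilon\big)$ for all $\mathcal{A}\subseteq\mathcal{X}$. Then $\mathbf{g}$ is almost representable.
   Context: A polymatroid $(\mathcal{X},\mathbf{h})$ is a finite ground set $\mathcal{X}=\{X_1,\dots,X_n\}$ with $\mathbf{h}:2^{\mathcal{X}}\to\mathbb{R}_{\ge0}$ satisfying $\mathbf{h}(\emptyset)=0$, monotonicity and submodularity. It is representable if for some finite field $\mathbb{F}_q$ there are subspaces $V_1,\dots,V_n$ of an $\mathbb{F}_q$-vector space with $\mathbf{h}(\{X_i:i\in\alpha\})=\dim\langle V_i:i\in\alpha\rangle$ for all $\alpha\subseteq\{1,\dots,n\}$. Rank functions are viewed as vectors in $\mathbb{R}^{2^{|\mathcal{X}|}}$. A function $\mathbf{h}$ is almost representable if $\mathbf{h}=\lim_{i\to\infty}c_i\mathbf{g}_i$ for some representable rank functions $\mathbf{g}_i$ on $\mathcal{X}$ and positive reals $c_i$. *)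

(* Defs.v *)
From HB Require Import structures.
From mathcomp Require Import all_boot all_order all_algebra all_field.
From mathcomp Require Import all_classical all_reals all_analysis.
Set Implicit Arguments. Unset Strict Implicit. Unset Printing Implicit Defensive.
Import Order.TTheory GRing.Theory Num.Theory.
Local Open Scope classical_set_scope.
Local Open Scope ring_scope.

(* Ground set X = {X_1,...,X_n} is modelled by 'I_n; subsets by {set 'I_n}.
   Rank functions are functions {set 'I_n} -> R. *)

Definition polymatroid (R : realType) (n : nat) (h : {set 'I_n} -> R) : Prop :=
  [/\ h finset.set0 = 0,
      (forall A, 0 <= h A),
      (forall A B : {set 'I_n}, A \subset B -> h A <= h B) &
      (forall A B : {set 'I_n}, h (A :|: B) + h (A :&: B) <= h A + h B)].

Definition representable (R : realType) (n : nat) (h : {set 'I_n} -> R) : Prop :=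
  exists (F : finFieldType) (vT : vectType F) (V : 'I_n -> {vspace vT}),
    forall A : {set 'I_n}, h A = (\dim (\sum_(i in A) V i)%VS)%:R.

(* h = lim c_i g_i in R^(2^n) (coordinatewise convergence, equivalent to
   convergence in the finite-dimensional space R^(2^n)). *)
Definition almost_representable (R : realType) (n : nat)
    (h : {set 'I_n} -> R) : Prop :=
  exists (g : nat -> {set 'I_n} -> R) (c : nat -> R),
    [/\ (forall k, representable (g k)),
        (forall k, 0 < c k) &
        (forall A : {set 'I_n}, c k * g k A @[k --> \oo] --> (h A : R^o))].

(* Main.v *)
Require Import Defs.
From HB Require Import structures.
From mathcomp Require Import all_boot all_order all_algebra all_field.
From mathcomp Require Import all_classical all_reals all_analysis.
From mathcomp Require Import zify.
Import Order.TTheory GRing.Theory Num.Theory.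
Local Open Scope ring_scope.

Definition mrepF {n : nat} {F : finFieldType} {d : nat} (M : 'I_n -> 'M[F]_d)
  (f : {set 'I_n} -> nat) := forall A : {set 'I_n}, \rank (\sum_(i in A) M i)%MS = f A.

Definition mrep {n : nat} (f : {set 'I_n} -> nat) :=
  exists (F : finFieldType) (d : nat) (M : 'I_n -> 'M[F]_d), mrepF M f.

Import VectorInternalTheory.
Section Conv.
Variable (F : finFieldType) (vT : vectType F).

Lemma vs2mxD' (U V : {vspace vT}) : vs2mx (U + V)%VS = (vs2mx U + vs2mx V)%MS.
Proof. by rewrite /= genmx_adds !gen_vs2mx. Qed.

Lemma vs2mx0' : vs2mx (0%VS : {vspace vT}) = 0.
Proof. by rewrite /= linear0 genmx0. Qed.

End Conv.

Lemma rep_mrep (R : realType) n (h : {set 'I_n} -> R) :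
  representable h -> exists f : {set 'I_n} -> nat, mrep f /\ h = (fun A => (f A)%:R).
Proof.
move=> [F [vT [V hV]]].
exists (fun A : {set 'I_n} => \dim (\sum_(i in A) V i)%VS); split; last first.
  by apply: funext => A; rewrite hV.
exists F, (dim vT), (fun i => vs2mx (V i)) => A.
by rewrite /dimv (big_morph _ (@vs2mxD' F vT) (@vs2mx0' F vT)).
Qed.

Lemma mrep_rep (R : realType) n (f : {set 'I_n} -> nat) :
  mrep f -> representable (fun A => (f A)%:R : R).
Proof.
move=> [F [d [M hM]]].
pose vT := 'rV[F]_d.
have e : dim vT = d.
  by rewrite /vT dim_matrix mul1r.
move: M hM; rewrite -e => M hM.
exists F, vT, (fun i => mx2vs (M i)) => A.
rewrite -hM /dimv (big_morph _ (@vs2mxD' F vT) (@vs2mx0' F vT)).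
have E : (\sum_(i in A) vs2mx (mx2vs (M i)) :=: \sum_(i in A) M i)%MS.
  by apply: eqmx_sums => i _; exact: mx2vsK.
by rewrite E.
Qed.
Section Blk.
Variable F : fieldType.

Lemma blk_sub m1 m2 m3 m4 d1 d2 (X : 'M[F]_(m1, d1)) (Y : 'M[F]_(m2, d2))
   (X' : 'M[F]_(m3, d1)) (Y' : 'M[F]_(m4, d2)) :
  (X <= X')%MS -> (Y <= Y')%MS -> (block_mx X 0 0 Y <= block_mx X' 0 0 Y')%MS.
Proof.
move=> /submxP[P ->] /submxP[Q ->].
have -> : block_mx (P *m X') 0 0 (Q *m Y') = block_mx P 0 0 Q *m block_mx X' 0 0 Y'.
  by rewrite mulmx_block !mulmx0 !mul0mx !addr0 !add0r.
exact: submxMl.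
Qed.

Lemma sum_blk n d1 d2 (P : pred 'I_n) (M : 'I_n -> 'M[F]_d1) (N : 'I_n -> 'M[F]_d2) :
  (\sum_(i | P i) block_mx (M i) 0 0 (N i) :=:
     block_mx (\sum_(i | P i) M i)%MS 0 0 (\sum_(i | P i) N i)%MS)%MS.
Proof.
apply/eqmxP/andP; split.
  apply/sumsmx_subP => i Pi; apply: blk_sub; exact: (sumsmx_sup i).
rewrite block_mxEv col_mx_sub; apply/andP; split.
  have -> : row_mx (\sum_(i | P i) M i)%MS (0 : 'M[F]_(d1, d2)) =
     (\sum_(i | P i) M i)%MS *m row_mx 1%:M 0 by rewrite mul_mx_row mulmx1 mulmx0.
  rewrite (sumsmxMr_gen P M).
  apply/sumsmx_subP => i Pi; rewrite genmxE.
  apply: submx_trans (sumsmx_sup i Pi (submx_refl _)).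
  rewrite mul_mx_row mulmx1 mulmx0 block_mxEv.
  by rewrite -addsmxE addsmxSl.
have -> : row_mx (0 : 'M[F]_(d2, d1)) (\sum_(i | P i) N i)%MS =
   (\sum_(i | P i) N i)%MS *m row_mx 0 1%:M by rewrite mul_mx_row mulmx1 mulmx0.
rewrite (sumsmxMr_gen P N).
apply/sumsmx_subP => i Pi; rewrite genmxE.
apply: submx_trans (sumsmx_sup i Pi (submx_refl _)).
rewrite mul_mx_row mulmx1 mulmx0 block_mxEv.
by rewrite -addsmxE addsmxSr.
Qed.

Lemma rank_sum_blk n d1 d2 (P : pred 'I_n) (M : 'I_n -> 'M[F]_d1) (N : 'I_n -> 'M[F]_d2) :
  \rank (\sum_(i | P i) block_mx (M i) 0 0 (N i))%MS =
     (\rank (\sum_(i | P i) M i)%MS + \rank (\sum_(i | P i) N i)%MS)%N.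
Proof. by rewrite sum_blk rank_diag_block_mx. Qed.
End Blk.
Lemma big_field (F : finFieldType) (N : nat) :
  exists (L : finFieldType) (f : {rmorphism F -> L}), (N < #|L|)%N.
Proof.
have [p pr_p pcharp] := finPcharP F.
pose M := (p ^ N.+1)%N.
have M2 : (1 < M)%N.
  by rewrite /M expnS (leq_trans (prime_gt1 pr_p)) // leq_pmulr // expn_gt0 prime_gt0.
have NM : (N < M)%N.
  by apply: (ltn_trans (ltn_expl N (prime_gt1 pr_p))); rewrite ltn_exp2l ?prime_gt1.
pose q : {poly F} := 'X^M - 'X.
have szX : forall (R : nzRingType), size ('X^M - 'X : {poly R}) = M.+1.
  move=> R; rewrite size_polyDl; first by rewrite size_polyXn.
  by rewrite size_polyN size_polyX size_polyXn ltnS.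
have nzq : q != 0 by rewrite -size_poly_eq0 szX.
have [L0 [rs Drs _]] := FinSplittingFieldFor nzq.
pose L := FinFieldExtType L0.
exists L, (in_alg L0).
move: Drs; rewrite rmorphB rmorphXn /= map_polyX => Drs.
have pcharL : p \in [pchar {poly L0}] by rewrite pchar_poly pchar_lalg.
have Mz : (M%:R : {poly L0}) = 0.
  by rewrite /M natrX (pcharf0 pcharL) expr0n.
have sep : separable_poly ('X^M - 'X : {poly L0}).
  rewrite unlock derivB derivXn derivX -mulr_natr Mz mulr0 sub0r.
  have -> : (-1 : {poly L0}) = (-1) *: 1 by rewrite scaleN1r.
  by rewrite coprimepZr ?oppr_eq0 ?oner_eq0 // coprimep1.
have urs : uniq rs by rewrite -separable_prod_XsubC -(eqp_separable Drs).
have srs : size rs = M.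
  by have := eqp_size Drs; rewrite szX size_prod_XsubC => -[].
have urs' : @uniq L rs := urs.
apply: (leq_trans NM); rewrite -srs -(card_uniqP urs').
exact: max_card.
Qed.
Lemma map_family (F L : fieldType) (f : {rmorphism F -> L}) n d
  (M : 'I_n -> 'M[F]_d) (P : pred 'I_n) :
  \rank (\sum_(i | P i) map_mx f (M i))%MS = \rank (\sum_(i | P i) M i)%MS.
Proof.
suff E : (\sum_(i | P i) map_mx f (M i) :=: map_mx f (\sum_(i | P i) M i)%MS)%MS.
  by rewrite E mxrank_map.
elim/big_rec2: _ => [|i y1 y2 Pi IH].
  by rewrite map_mx0; exact: eqmx_refl.
apply: eqmx_trans (eqmx_sym (map_addsmx _ _ _)).
exact: adds_eqmx (eqmx_refl _) IH.
Qed.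
Lemma card_setn n : #|{set 'I_n}| = (2 ^ n)%N.
Proof. by rewrite -cardsT -powersetT card_powerset cardsT card_ord. Qed.

Lemma card_bigcup_leq (I T : finType) (P : pred I) (B : I -> {set T}) :
  (#|\bigcup_(i | P i) B i| <= \sum_(i | P i) #|B i|)%N.
Proof.
elim/big_rec2: _ => [|i x y Pi IH]; first by rewrite cards0.
by apply: leq_trans (leq_card_setU _ _).1 _; rewrite leq_add2l.
Qed.

Section Trunc.
Variable L : finFieldType.

Lemma card_rows m d (U : 'M[L]_(m, d)) :
  #|[set u : 'rV[L]_d | (u <= U)%MS]| = (#|L| ^ \rank U)%N.
Proof.
pose f (x : 'rV[L]_(\rank U)) := x *m row_base U.
have finj : injective f by apply: row_free_inj; exact: row_base_free.
have -> : [set u : 'rV[L]_d | (u <= U)%MS] = f @: [set: 'rV[L]_(\rank U)].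
  apply/setP => u; rewrite inE; apply/idP/imsetP.
    by rewrite -(eq_row_base U) => /submxP[x ->]; exists x; rewrite ?inE.
  by move=> [x _ ->]; rewrite /f -(eq_row_base U) submxMl.
by rewrite card_imset // cardsT card_mx mul1n.
Qed.

Variable n : nat.
Definition Us {d} (M : 'I_n -> 'M[L]_d) (A : {set 'I_n}) := (\sum_(i in A) M i)%MS.
Hypothesis bigL : (2 ^ n < #|L|)%N.

Lemma avoid d (M : 'I_n -> 'M[L]_d) (U := Us M) :
  (0 < \rank (U [set: 'I_n]))%N ->
  exists w : 'rV[L]_d, (w <= U [set: 'I_n])%MS /\
    forall A, (\rank (U A) < \rank (U [set: 'I_n]))%N -> ~~ (w <= U A)%MS.
Proof.
move=> r0; have [r Dr] : {r | \rank (U [set: 'I_n]) = r} by exists (\rank (U [set: 'I_n])).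
rewrite Dr in r0 *.
have cL : (0 < #|L|)%N by apply/card_gt0P; exists 0.
pose Bad := \bigcup_(A : {set 'I_n} | (\rank (U A) < r)%N) [set u : 'rV[L]_d | (u <= U A)%MS].
have cB : (#|Bad| < #|[set u : 'rV[L]_d | (u <= U [set: 'I_n])%MS]|)%N.
  have c1 := @card_bigcup_leq _ _ (fun A : {set 'I_n} => (\rank (U A) < r)%N)
    (fun A => [set u : 'rV[L]_d | (u <= U A)%MS]).
  apply: leq_ltn_trans c1 _.
  apply: (@leq_ltn_trans (\sum_(A : {set 'I_n}) #|L| ^ r.-1)%N).
    rewrite big_mkcond /=; apply: leq_sum => A _; case: ifP => // hA.
    rewrite card_rows leq_pexp2l //; by move: hA; rewrite -{1}(prednK r0) ltnS.
  rewrite card_rows sum_nat_const card_setn Dr.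
  by rewrite -{2}(prednK r0) expnS ltn_pmul2r // expn_gt0 cL.
have : ~~ ([set u : 'rV[L]_d | (u <= U [set: 'I_n])%MS] \subset Bad).
  by apply: contraL cB => /subset_leq_card; rewrite leqNgt.
case/subsetPn => w; rewrite inE => wS wB; exists w; split => // A hA.
by apply: contra wB => wA; apply/bigcupP; exists A => //; rewrite inE.
Qed.

Lemma UsS d (M : 'I_n -> 'M[L]_d) A : (Us M A <= Us M [set: 'I_n])%MS.
Proof. by apply/sumsmx_subP => i _; apply: (sumsmx_sup i) => //; rewrite inE. Qed.

Lemma step d (M : 'I_n -> 'M[L]_d) : (0 < \rank (Us M [set: 'I_n]))%N ->
  exists M' : 'I_n -> 'M[L]_d,
    forall A, \rank (Us M' A) = minn (\rank (Us M A)) (\rank (Us M [set: 'I_n])).-1.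
Proof.
move=> r0; have [w [wS wA]] := @avoid _ M r0.
have w0 : w != 0.
  have := wA finset.set0; rewrite /Us big_set0 mxrank0 => /(_ r0).
  by apply: contraNneq => ->; rewrite sub0mx.
pose P := cokermx w.
exists (fun i => M i *m P) => A.
have UsM : (Us (fun i => M i *m P) A :=: Us M A *m P)%MS.
  by apply: eqmx_sym; exact: sumsmxMr.
have kerP : (kermx P :=: w)%MS.
  apply/eqmxP/andP; split; first by rewrite submxE -sub_kermx submx_refl.
  by rewrite sub_kermx -submxE submx_refl.
have := mxrank_mul_ker (Us M A) P.
rewrite -UsM (cap_eqmx (eqmx_refl _) kerP).
have uS := mxrankS (UsS _ M A).
case: (boolP (w <= Us M A)%MS) => wU.
  rewrite (capmx_idPr wU) rank_rV w0 => e.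
  have eu : \rank (Us M A) = \rank (Us M [set: 'I_n]).
    apply/eqP; rewrite eqn_leq uS /= leqNgt; apply/negP => /wA.
    by rewrite wU.
  move: e eu uS r0; lia.
have c0 : \rank (Us M A :&: w)%MS = 0%N.
  have c1 := mxrankS (capmxSr (Us M A) w); rewrite rank_rV w0 in c1.
  have cw : \rank (Us M A :&: w)%MS != 1%N.
    apply/negP => /eqP h.
    have : (\rank (Us M A :&: w)%MS == \rank w) by rewrite h rank_rV w0.
    rewrite (mxrank_leqif_eq (capmxSr (Us M A) w)).2 => /eqmxP E.
    by case/negP: wU; rewrite -E capmxSl.
  move: c1 cw; lia.
rewrite c0 => e.
have ult : (\rank (Us M A) < \rank (Us M [set: 'I_n]))%N.
  rewrite ltn_neqAle uS andbT; apply: contra wU => /eqP eu.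
  case: (mxrank_leqif_eq (UsS _ M A)) => _; rewrite eu eqxx => /esym /eqmxP E.
  by rewrite E.
move: e ult; lia.
Qed.

Lemma iter_step j : forall d (M : 'I_n -> 'M[L]_d), (j <= \rank (Us M [set: 'I_n]))%N ->
  exists M' : 'I_n -> 'M[L]_d,
    forall A, \rank (Us M' A) = minn (\rank (Us M A)) (\rank (Us M [set: 'I_n]) - j).
Proof.
elim: j => [|j IH] d M hj.
  exists M => A; have := mxrankS (UsS _ M A); lia.
have [M1 h1] := IH d M (ltnW hj).
have r1 : (0 < \rank (Us M1 [set: 'I_n]))%N.
  rewrite h1; have := mxrankS (UsS _ M [set: 'I_n]); lia.
have [M2 h2] := @step _ M1 r1.
exists M2 => A; rewrite h2 !h1.
have := mxrankS (UsS _ M A); move: hj; lia.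
Qed.

Lemma trunc d (M : 'I_n -> 'M[L]_d) (t : nat) :
  exists M' : 'I_n -> 'M[L]_d, forall A, \rank (Us M' A) = minn (\rank (Us M A)) t.
Proof.
case: (leqP (\rank (Us M [set: 'I_n])) t) => ht.
  have [M' h] := @iter_step 0 d M (leq0n _).
  exists M' => A; rewrite h; have := mxrankS (UsS _ M A); move: ht; lia.
have [M' h] := @iter_step (\rank (Us M [set: 'I_n]) - t) d M (leq_subr _ _).
exists M' => A; rewrite h; move: ht; lia.
Qed.
End Trunc.
Lemma mrep_trunc n (f : {set 'I_n} -> nat) (t : nat) :
  mrep f -> mrep (fun A => minn (f A) t).
Proof.
move=> [F [d [M hM]]].
have [L [phi bigL]] := big_field F (2 ^ n).
pose M1 := fun i => map_mx phi (M i).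
have [M' hM'] := @trunc L n bigL d M1 t.
exists L, d, M' => A.
by have := hM' A; rewrite /Us /M1 map_family hM.
Qed.

Lemma mrep_scale n (f : {set 'I_n} -> nat) k :
  mrep f -> mrep (fun A => (2 ^ k * f A)%N).
Proof.
move=> hf; elim: k => [|k [F [d [M hM]]]].
  by case: hf => F [d [M hM]]; exists F, d, M => A; rewrite hM expn0 mul1n.
exists F, (d + d)%N, (fun i => block_mx (M i) 0 0 (M i)) => A.
by rewrite /mrepF rank_sum_blk hM expnS -mulnA mul2n -addnn.
Qed.

Section Anal.
Local Open Scope classical_set_scope.
Lemma cvg_min_seq (R : realType) (u v : nat -> R^o) (a b : R^o) :
  u @ \oo --> a -> v @ \oo --> b ->
  (fun k => Num.min (u k) (v k) : R^o) @ \oo --> (Num.min a b : R^o).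
Proof.
move=> hu hv.
have -> : (fun k => Num.min (u k) (v k) : R^o) = (fun k => (u k + v k - `|u k - v k|) / 2).
  by apply: funext => k; rewrite minr_absE.
rewrite minr_absE.
apply: cvgMl.
apply: cvgB; first exact: cvgD.
by apply: cvg_norm; apply: cvgB.
Qed.
End Anal.


Section Anal2.
Local Open Scope classical_set_scope.
Import numFieldNormedType.Exports.
Lemma harm_sq {R : realType} (c : nat -> R) :
  (forall k, 0 <= c k <= harmonic k) -> c @ \oo --> (0 : R).
Proof.
move=> H.
apply: (@squeeze_cvgr _ _ _ R (cst 0) harmonic c).
- by apply: nearW => k; exact: H.
- exact: cvg_cst.
- exact: cvg_harmonic.
Qed.
Lemma sq2 {R : realType} (t : R) (c b : nat -> R) :
  c @ \oo --> (0 : R) -> (forall k, t - c k <= b k <= t) -> b @ \oo --> t.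
Proof.
move=> c0 H.
apply: (@squeeze_cvgr _ _ _ R (fun k => t - c k) (cst t) b).
- by apply: nearW => k; exact: H.
- by rewrite -[X in _ --> X]subr0; apply: cvgB => //; exact: cvg_cst.
- exact: cvg_cst.
Qed.
End Anal2.
Lemma harm_sq' (R : realType) (c : nat -> R) :
  (forall k, 0 <= c k <= harmonic k) -> (c @ \oo --> (0 : R^o))%classic.
Proof. move=> H; exact: harm_sq H. Qed.
Lemma sq2' (R : realType) (t : R) (c b : nat -> R) :
  (forall k, 0 <= c k <= harmonic k) -> (forall k, t - c k <= b k <= t) ->
  (b @ \oo --> (t : R^o))%classic.
Proof. move=> H1 H2; exact: (sq2 _ _ _ (harm_sq _ H1) H2). Qed.

Theorem theorem3 (R : realType) (n : nat) (h : {set 'I_n} -> R) (eps : R) :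
  polymatroid h -> almost_representable h ->
  0 <= eps -> eps <= h [set: 'I_n] ->
  almost_representable (fun A : {set 'I_n} => Num.min (h A) (h [set: 'I_n] - eps)).
Proof.
move=> _ [g [c [grep cpos cv]]] e0 eX.
set t := h [set: 'I_n] - eps.
have t0 : 0 <= t by rewrite subr_ge0.
have [f hf] := choice (fun k => @rep_mrep R n (g k) (grep k)).
have [j hj] : {j : nat -> nat & forall k, c k * k.+1%:R < (2 ^ j k)%:R}.
  exists (fun k => Num.bound (c k * k.+1%:R)) => k.
  have x0 : 0 <= c k * k.+1%:R by rewrite mulr_ge0 // ltW.
  apply: lt_le_trans (archi_boundP x0) _.
  by rewrite ler_nat ltnW // ltn_expl.
pose m k := (2 ^ j k)%N.
pose c' k := c k / (m k)%:R.
have mpos k : (0 : R) < (m k)%:R by rewrite ltr0n expn_gt0.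
have c'pos k : 0 < c' k by rewrite divr_gt0.
pose r k := Num.truncn (t / c' k).
exists (fun k A => (minn (m k * f k A) (r k))%:R), c'; split.
- move=> k; apply: mrep_rep; apply: mrep_trunc; apply: mrep_scale.
  exact: (hf k).1.
- exact: c'pos.
move=> A.
have E : forall k, c' k * (minn (m k * f k A) (r k))%:R =
    Num.min (c k * g k A) (c' k * (r k)%:R).
  move=> k; rewrite (hf k).2 /=.
  rewrite -[minn _ _]/(Order.min _ _) natr_min minr_pMr; last exact: ltW.
  by rewrite natrM /c' mulrA divfK // gt_eqF.
have -> : (fun k => c' k * (minn (m k * f k A) (r k))%:R) =
    (fun k => Num.min (c k * g k A) (c' k * (r k)%:R)).
  by apply: funext => k; exact: E.
have c'b : forall k, 0 <= c' k <= harmonic k.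
  move=> k; rewrite /= (ltW (c'pos k)) /=.
  rewrite ler_pdivrMr // mulrC ler_pdivlMr //.
  exact: ltW (hj k).
apply: (@cvg_min_seq R (fun k => c k * g k A) (fun k => c' k * (r k)%:R)); first exact: cv.
apply: (@sq2' R t c' _ c'b) => k.
have [h1 h2] := andP (truncn_itv (divr_ge0 t0 (ltW (c'pos k)))).
rewrite -/(r k) in h1 h2.
rewrite ltr_pdivrMr // -natr1 mulrDl mul1r in h2.
rewrite ler_pdivlMr // in h1.
apply/andP; split; last by rewrite mulrC.
by rewrite lerBlDr mulrC ltW.
Qed.
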